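(* Let $R$ be a ring with unity and involution $*$, and let $a\in R$. The following statements are equivalent. (1) $a$ is left dual core invertible. (2) $a^2$ is strongly left $(a^*,a)$-invertible. (3) $a^2$ is strongly left $(a^*,1)$-invertible. (4) $a$ is strongly left $(a^*,a)$-invertible.
   Context: $a$ is left dual core invertible if there exists $x\in R$ with $axa=a$, $(xa)^*=xa$ and $x^2a=x$. For $u,b,c\in R$, $u$ is strongly left $(b,c)$-invertible if $b\in Rcub$ and $cub$ is regular (there exists $z$ with $cub\,z\,cub=cub$). *)

(* Defs.v *)
From mathcomp Require Import all_boot all_algebra.
Set Implicit Arguments. Unset Strict Implicit. Unset Printing Implicit Defensive.
Import GRing.Theory.
Local Open Scope ring_scope.

Definition involution (R : pzRingType) (star : R -> R) : Prop :=
  [/\ forall x y : R, star (x + y) = star x + star y,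
      forall x y : R, star (x * y) = star y * star x
    & forall x : R, star (star x) = x].

Definition left_dual_core_invertible (R : pzRingType) (star : R -> R) (a : R) : Prop :=
  exists x : R, [/\ a * x * a = a, star (x * a) = x * a & x ^+ 2 * a = x].

Definition regular (R : pzRingType) (y : R) : Prop := exists z : R, y * z * y = y.

Definition strongly_left_inv (R : pzRingType) (u b c : R) : Prop :=
  (exists r : R, b = r * (c * u * b)) /\ regular (c * u * b).

(* Main.v *)
Require Import Defs.
From mathcomp Require Import all_boot all_algebra.
Import GRing.Theory.
Local Open Scope ring_scope.

Section S.
Variables (R : pzRingType) (star : R -> R).
Hypothesis Hstar : involution star.
Lemma starM x y : star (x * y) = star y * star x.
Proof. by case: Hstar. Qed.
Lemma starK x : star (star x) = x.
Proof. by case: Hstar. Qed.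

Lemma L3 {u v w p : R} : u * v * w = p -> forall t, t * u * v * w = t * p.
Proof. by move=> H t; rewrite -H !mulrA. Qed.
Lemma L2 {u v p : R} : u * v = p -> forall t, t * u * v = t * p.
Proof. by move=> H t; rewrite -H !mulrA. Qed.

Lemma l12 a : left_dual_core_invertible star a ->
  strongly_left_inv (a ^+ 2) (star a) a.
Proof.
case=> x [Hax Hs Hx]; rewrite expr2 in Hx *.
set s := star a.
have sa : s = x * a * s.
  by rewrite /s -{1}Hax -mulrA starM Hs.
have aa : a = a * s * star x.
  by rewrite -{1}(starK a) -/s {1}sa -mulrA starM starM /s starK.
have x3 : x = x * x * x * a * a.
  by rewrite (L3 Hx) Hx.
split.
  exists (x * x * x).
  by rewrite !mulrA -x3 -sa.
exists (star x * (x * x * x)).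
have x3L t : t * x * x * x * a * a = t * x by rewrite (L3 Hx) (L3 Hx).
have aaL := L3 (esym aa).
by rewrite !mulrA aaL x3L (L3 Hax).
Qed.

Lemma l23 a : strongly_left_inv (a ^+ 2) (star a) a ->
  strongly_left_inv (a ^+ 2) (star a) 1.
Proof.
rewrite expr2; set s := star a.
case=> [[r Hr] [w Hw]].
have E : s = s * w * a * a * a * s.
  have Hr' : r * a * a * a * s = s by rewrite [RHS]Hr !mulrA.
  by rewrite {1}Hr -Hw !mulrA Hr'.
have EL t : t * s * w * a * a * a * s = t * s by rewrite {3}E !mulrA.
split.
  exists (r * a); by rewrite mul1r {1}Hr !mulrA.
exists (w * a); by rewrite !mul1r !mulrA EL.
Qed.

Lemma l34 a : strongly_left_inv (a ^+ 2) (star a) 1 ->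
  strongly_left_inv a (star a) a.
Proof. by rewrite /strongly_left_inv /regular expr2 mul1r. Qed.

Lemma l41 a : strongly_left_inv a (star a) a -> left_dual_core_invertible star a.
Proof.
set s := star a.
case=> [[r Hr] [z Hz]].
have E1 : s = s * z * a * a * s.
  have Hr' : r * a * a * s = s by rewrite [RHS]Hr !mulrA.
  by rewrite {1}Hr -Hz !mulrA Hr'.
have E2 : a = a * s * s * star z * a.
  by rewrite -{1}(starK a) -/s {1}E1 !starM /s starK !mulrA.
have Gs : star (s * z * a * a) = s * s * star z * a.
  by rewrite !starM /s starK !mulrA.
have GG : s * z * a * a * star (s * z * a * a) = star (s * z * a * a).
  by rewrite Gs !mulrA -E1.
have GH : star (s * z * a * a) = s * z * a * a.
  set G := s * z * a * a in GG *.
  by have := congr1 star GG; rewrite starM !starK GG.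
have aG : a * (s * z * a * a) = a.
  by rewrite -GH Gs !mulrA -E2.
have GP : s * z * a * a = r * a * a.
  have aGL t : t * a * s * z * a * a = t * a by rewrite -[in RHS]aG !mulrA.
  by rewrite {1}Hr !mulrA aGL.
have aPL t : t * a * r * a * a = t * a by rewrite -[in RHS]aG GP !mulrA.
have PH : star (r * a * a) = r * a * a by rewrite -GP.
exists (r * a * a * r * a); split.
- by rewrite !mulrA aPL -[a * r]mul1r !mulrA aPL mul1r.
- by rewrite aPL.
- by rewrite expr2 !mulrA !aPL.
Qed.
End S.

Theorem corollary3p13 (R : pzRingType) (star : R -> R)
    (Hstar : involution star) (a : R) :
  [<-> left_dual_core_invertible star a;
       strongly_left_inv (a ^+ 2) (star a) a;
       strongly_left_inv (a ^+ 2) (star a) 1;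
       strongly_left_inv a (star a) a].
Proof.
tfae.
- exact: l12.
- exact: l23.
- exact: l34.
- exact: l41.
Qed.
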